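(* Fix integers $T,C,K\ge 1$, lengths $T_2,\dots,T_K\ge 1$, and the following data. (a) A linear map $W_\theta:\mathbb{R}^{T\times C}\to\mathbb{R}^{N}$ (a short-time Fourier transform) with constants $0<A\le B<\infty$ such that $\sqrt{A}\|\bm Y\|_2\le\|W_\theta(\bm Y)\|_2\le\sqrt{B}\|\bm Y\|_2$ for all $\bm Y\in\mathbb{R}^{T\times C}$. (b) For each $k=2,\dots,K$ a fixed linear upsampling operator $\operatorname{Up}_T:\mathbb{R}^{T_k}\to\mathbb{R}^{T}$. (c) A moving-average smoother $\mathrm{MA}_\kappa:\mathbb{R}^T\to\mathbb{R}^T$ of the form $(\mathrm{MA}_\kappa u)(t)=\sum_{s\in\mathcal W_t} w_{t,s}u(s)$, where $\mathcal W_t\subseteq\{1,\dots,T\}$ is the averaging window of $t$ and the weights satisfy $w_{t,s}\ge 0$, $\sum_{s\in\mathcal W_t}w_{t,s}=1$; assume moreover there is $\rho_\kappa\ge 1$ with $\langle(\mathrm{MA}_\kappa u)(t)\rangle_t\le\rho_\kappa\langle u(t)\rangle_t$ for every nonnegative sequence $u$. (d) Nonnegative score weights $\alpha_f,\alpha_t,\alpha_g,\alpha_c,\alpha_{\mathrm{cyc}},\alpha_{\mathrm{ms}}$ and positive loss weights $\omega_2,\dots,\omega_K,\omega_{\mathrm{full}}$ with $\sum_{k=2}^K\omega_k+\omega_{\mathrm{full}}=1$. For arrays $\bm X,\hat{\bm X},\hat{\bm X}_{\leftarrow f},\hat{\bm X}_{\mathrm{ms}}\in\mathbb{R}^{T\times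 C}$, arrays $\bm X^{(k)},\hat{\bm X}^{(k)}_{\mathrm{ms}}\in\mathbb{R}^{T_k\times C}$ ($k=2,\dots,K$) and a real sequence $g(t)$, $t=1,\dots,T$, put $\bm S=W_\theta(\bm X)$, $\hat{\bm S}_{\rightarrow f}=W_\theta(\hat{\bm X})$, $c(t)=|\hat{\bm X}_{\mathrm{ms}}(t)-\hat{\bm X}_{\leftarrow f}(t)|$ and \[ \mathcal{L}_{\mathrm{ms}}=\sum_{k=2}^K\omega_k\,l(\hat{\bm X}^{(k)}_{\mathrm{ms}},\bm X^{(k)})+\omega_{\mathrm{full}}\,l(\hat{\bm X}_{\mathrm{ms}},\bm X),\quad \mathcal{L}_{\mathrm{cyc}}=l(\hat{\bm S}_{\rightarrow f},\bm S)+l(\hat{\bm X}_{\leftarrow f},\bm X),\quad \mathcal{L}_{\mathrm{cons}}=l(\hat{\bm X}_{\mathrm{ms}},\hat{\bm X}_{\leftarrow f}), \] \[ \tilde{\mathcal A}_{\mathrm{cyc}}(t)=\alpha_f|\hat{\bm X}_{\leftarrow f}(t)-\bm X(t)|+\alpha_t|\hat{\bm X}(t)-\bm X(t)|+\alpha_g|g(t)|+\alpha_c c(t),\qquad \mathcal A_{\mathrm{cyc}}=\mathrm{MA}_\kappa(\tilde{\mathcal A}_{\mathrm{cyc}}), \] \[ \mathcal A_{\mathrm{ms}}(t)=|\hat{\bm X}_{\mathrm{ms}}(t)-\bm X(t)|+\sum_{k=2}^K\operatorname{Up}_T\big(|\hat{\bm X}^{(k)}_{\mathrm{ms}}-\bm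 X^{(k)}|\big)(t),\qquad \mathcal A(t)=\alpha_{\mathrm{cyc}}\mathcal A_{\mathrm{cyc}}(t)+\alpha_{\mathrm{ms}}\mathcal A_{\mathrm{ms}}(t). \] Then: (1) There exist constants $\kappa_{\mathrm{ms}},\kappa_{\mathrm{cyc}},\kappa_{\mathrm{cons}},\kappa_g,\kappa_0\ge 0$, not depending on the arrays $\bm X,\hat{\bm X},\hat{\bm X}_{\leftarrow f},\hat{\bm X}_{\mathrm{ms}},\bm X^{(k)},\hat{\bm X}^{(k)}_{\mathrm{ms}}$ or on $g$ (only on the fixed weights, dimensions and scales, operators, and $\rho_\kappa$), such that whenever $\mathcal L_{\mathrm{ms}}\le\varepsilon_{\mathrm{ms}}$, $\mathcal L_{\mathrm{cyc}}\le\varepsilon_{\mathrm{cyc}}$ and $\mathcal L_{\mathrm{cons}}\le\varepsilon_{\mathrm{cons}}$, \[ \langle\mathcal A(t)\rangle_t\le\kappa_{\mathrm{ms}}\varepsilon_{\mathrm{ms}}+\rho_\kappa\kappa_{\mathrm{cyc}}\varepsilon_{\mathrm{cyc}}+\rho_\kappa\kappa_{\mathrm{cons}}\varepsilon_{\mathrm{cons}}+\rho_\kappa\kappa_g\alpha_g\langle|g(t)|\rangle_t+\kappa_0 . \] (2) Let $\Omega\subseteq\{1,\dots,T\}$ be nonempty. If $\langle|\hat{\bm X}(t)-\bm X(t)|\rangle_{t\in\Omega}\ge\delta_t$, $\langle|\hat{\bm X}_{\leftarrow f}(t)-\bm X(t)|\rangle_{t\in\Omega}\ge\delta_f$ and $\langle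 c(t)\rangle_{t\in\Omega}\ge\delta_c$, then $\langle\tilde{\mathcal A}_{\mathrm{cyc}}(t)\rangle_{t\in\Omega}\ge\alpha_t\delta_t+\alpha_f\delta_f+\alpha_c\delta_c$. (3) If moreover $|\hat{\bm X}(t)-\bm X(t)|\ge\delta_t$, $|\hat{\bm X}_{\leftarrow f}(t)-\bm X(t)|\ge\delta_f$ and $c(t)\ge\delta_c$ for all $t\in\Omega$, then for every $t\in\Omega$ with $\mathcal W_t\subseteq\Omega$ one has $\mathcal A_{\mathrm{cyc}}(t)\ge\alpha_t\delta_t+\alpha_f\delta_f+\alpha_c\delta_c$. (4) If $\bm p_t(t),\tilde{\bm p}_f(t)$ ($t\in\Omega$) are probability vectors on a common finite set with $\|\bm p_t(t)-\tilde{\bm p}_f(t)\|_1\ge\delta_p$ for all $t\in\Omega$, then $d(t)=\mathrm{JS}(\bm p_t(t),\tilde{\bm p}_f(t))$ satisfies $\langle d(t)\rangle_{t\in\Omega}\ge\frac18\delta_p^2$.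
   Context: $\|\cdot\|_2$ is the Euclidean (Frobenius) norm of an array. For an array $\bm Y$ with rows indexed by time, $|\bm Y(t)|$ denotes the sum of absolute values of the entries in row $t$ (a nonnegative scalar per timestamp); $|\hat{\bm X}^{(k)}_{\mathrm{ms}}-\bm X^{(k)}|$ is the resulting length-$T_k$ sequence. $\langle u(t)\rangle_t=\frac1T\sum_{t=1}^T u(t)$ and $\langle u(t)\rangle_{t\in\Omega}=\frac1{|\Omega|}\sum_{t\in\Omega}u(t)$. The loss $l(\hat{\bm Y},\bm Y)$ is the mean over all entries of the SmoothL1 (Huber) function $\psi(r)=\tfrac12 r^2$ if $|r|<1$ and $\psi(r)=|r|-\tfrac12$ otherwise, applied to the entrywise difference $r=\hat Y-Y$. $\mathrm{JS}(p,q)=\tfrac12\mathrm{KL}(p\|m)+\tfrac12\mathrm{KL}(q\|m)$ with $m=\tfrac12(p+q)$ is the Jensen–Shannon divergence (natural logarithm). In the paper $\hat{\bm X}$ is the time-domain decoder output, $\hat{\bm X}_{\leftarrow f}$ the inverse-STFT of the predicted spectrum, $\hat{\bm X}_{\mathrm{ms}}$ the multi-scale reconstruction, $\bm X^{(k)}$ the band-limited downsampled scales, and $g(t)$ an uncertainty gate; the lemma holds for arbitrary such arrays. *)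

(* Defs.v *)
From HB Require Import structures.
From mathcomp Require Import all_boot all_order all_algebra.
From mathcomp Require Import reals exp.
Set Implicit Arguments. Unset Strict Implicit. Unset Printing Implicit Defensive.
Import Order.TTheory GRing.Theory Num.Theory.
Local Open Scope ring_scope.

Section Defs.
Variable R : realType.

Definition frob m n (Y : 'M[R]_(m, n)) : R :=
  Num.sqrt (\sum_(i < m) \sum_(j < n) Y i j ^+ 2).

Definition huber (r : R) : R :=
  if `|r| < 1 then r ^+ 2 / 2 else `|r| - 1 / 2.

Definition loss m n (Yh Y : 'M[R]_(m, n)) : R :=
  (\sum_(i < m) \sum_(j < n) huber (Yh i j - Y i j)) / (m * n)%:R.

(* |Y(t)| : sum of absolute values of the entries of row t *)
Definition rowabs m n (Y : 'M[R]_(m, n)) (t : 'I_m) : R :=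
  \sum_(j < n) `|Y t j|.

Definition rowabs_vec m n (Y : 'M[R]_(m, n)) : 'rV[R]_m :=
  \row_(t < m) rowabs Y t.

Definition tmean T (u : 'I_T -> R) : R := (\sum_(t < T) u t) / T%:R.

Definition tmean_on T (Om : {set 'I_T}) (u : 'I_T -> R) : R :=
  (\sum_(t in Om) u t) / #|Om|%:R.

Definition MA T (Wn : 'I_T -> {set 'I_T}) (w : 'I_T -> 'I_T -> R)
  (u : 'I_T -> R) (t : 'I_T) : R :=
  \sum_(s in Wn t) w t s * u s.

Definition is_prob (S : finType) (p : S -> R) : Prop :=
  (forall x, 0 <= p x) /\ \sum_x p x = 1.

Definition l1dist (S : finType) (p q : S -> R) : R := \sum_x `|p x - q x|.

(* KL divergence, natural log, convention 0 ln(0/.) = 0 *)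
Definition KL (S : finType) (p q : S -> R) : R :=
  \sum_x (if p x == 0 then 0 else p x * ln (p x / q x)).

Definition JS (S : finType) (p q : S -> R) : R :=
  let m := fun x => (p x + q x) / 2 in
  KL p m / 2 + KL q m / 2.

End Defs.

(* Main.v *)
Require Import Defs.
From HB Require Import structures.
From mathcomp Require Import all_boot all_order all_algebra.
From mathcomp Require Import ring lra.
From mathcomp Require Import reals exp.
From mathcomp Require boolp classical_sets topology normedtype derive realfun.
Import Order.TTheory GRing.Theory Num.Theory.
Local Open Scope ring_scope.

Module CalcM.
Import boolp classical_sets topology normedtype derive realfun.
Import numFieldNormedType.Exports.
Section Calc.
Variable R : realType.
Local Open Scope classical_set_scope.

Lemma der_f1 (x : R) : -1 < x -> is_derive x 1 (fun y : R => ln (y + 1)) (x + 1)^-1.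
Proof.
move=> hx.
have h : 0 < x + 1 by rewrite -ltrBlDr sub0r.
have := @is_derive1_comp R (@ln R) (fun y => y + 1) x (x + 1)^-1 1.
rewrite mulr1; apply; first exact: is_derive1_ln.
exact: is_derive_shift.
Qed.

Lemma der_f2 (x : R) : x < 1 -> is_derive x 1 (fun y : R => ln (- y + 1)) (- (- x + 1)^-1).
Proof.
move=> hx.
have hN : is_derive x 1 (fun y : R => - y) (-1) by exact: (@is_deriveNid R R^o x 1).
have := @is_derive1_comp R (fun y => ln (y + 1)) (fun y => - y) x ((- x + 1)^-1) (-1).
rewrite mulrN1; apply => //.
apply: der_f1. by rewrite ltrN2.
Qed.

Lemma der_phi (x : R) : -1 < x < 1 ->
  is_derive x 1 (fun y : R => ln (y + 1) - ln (- y + 1) - 2 * y)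
   ((x + 1)^-1 + (- x + 1)^-1 - 2).
Proof.
case/andP=> h1 h2.
have hl : is_derive x 1 (fun y : R => 2 * y) 2.
  have := @is_deriveZ R R^o R^o id 2 x 1 1 (@is_derive_id R R^o x 1).
  by rewrite /GRing.scale /= mulr1.
have := is_deriveB (is_deriveB (@der_f1 x h1) (@der_f2 x h2)) hl.
by rewrite opprK.
Qed.

Lemma phi_ge0 (a : R) : 0 <= a < 1 -> 2 * a <= ln (a + 1) - ln (- a + 1).
Proof.
case/andP=> ha0 ha1.
set f := (fun y : R => ln (y + 1) - ln (- y + 1) - 2 * y).
have hd : forall x, x \in `[0, a]%R -> is_derive x 1 f ((x + 1)^-1 + (- x + 1)^-1 - 2).
  move=> x; rewrite in_itv /= => /andP[h0 h1]; apply: der_phi.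
  apply/andP; split; first by apply: lt_le_trans h0; rewrite ltrN10.
  exact: le_lt_trans h1 ha1.
have [c hc hfc] := @MVT_segment R f (fun x => (x + 1)^-1 + (- x + 1)^-1 - 2) 0 a ha0
  (fun x hx => hd x (subset_itv_oo_cc hx)) (derivable_within_continuous (fun x hx => @ex_derive _ _ _ _ _ _ _ (hd x hx))).
move: hc; rewrite in_itv /= => /andP[hc0 hc1].
have hca : c < 1 by exact: le_lt_trans hc1 ha1.
have hpos : 0 <= (c + 1)^-1 + (- c + 1)^-1 - 2.
  have p1 : 0 < c + 1 by apply: ltr_wpDl.
  have p2 : 0 < - c + 1 by rewrite addrC subr_gt0.
  have e : (c + 1)^-1 + (- c + 1)^-1 - 2 = 2 * c ^+ 2 / ((c + 1) * (- c + 1)).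
    by field; apply/andP; split; rewrite gt_eqF.
  rewrite e; apply: divr_ge0; first by apply: mulr_ge0 => //; exact: sqr_ge0.
  by apply: mulr_ge0; apply: ltW.
have : 0 <= f a - f 0 by rewrite hfc; apply: mulr_ge0 => //; rewrite subr0.
rewrite /f !oppr0 !add0r mulr0 ln1 !subr0 subr_ge0.
by [].
Qed.

Lemma der_G (x : R) : -1 < x ->
  is_derive x 1 (fun y : R => (y + 1) * ln (y + 1)) (ln (x + 1) + 1).
Proof.
move=> hx.
have h : 0 < x + 1 by rewrite -ltrBlDr sub0r.
have := is_deriveM (@is_derive_shift R x 1 1) (@der_f1 x hx).
rewrite /GRing.scale /= mulr1 mulfV ?gt_eqF //.
by rewrite addrC.
Qed.

Lemma der_H (x : R) : -1 < x < 1 ->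
  is_derive x 1 (fun y : R => (y + 1) * ln (y + 1) + (- y + 1) * ln (- y + 1) - y ^+ 2)
   (ln (x + 1) - ln (- x + 1) - 2 * x).
Proof.
case/andP=> h1 h2.
have hN : is_derive x 1 (fun y : R => - y) (-1) by exact: (@is_deriveNid R R^o x 1).
have h2' : -1 < - x by rewrite ltrN2.
have := @is_derive1_comp R (fun y => (y + 1) * ln (y + 1)) (fun y => - y) x _ (-1) (@der_G (- x) h2') hN.
move=> hG2.
have hsq : is_derive x 1 (fun y : R => y ^+ 2) (2 * x).
  have := @is_deriveX R R^o id 2 x 1 1 (@is_derive_id R R^o x 1).
  by rewrite /GRing.scale /= mulr1 expr1.
have := is_deriveB (is_deriveD (@der_G x h1) hG2) hsq.
move=> H; apply: (is_derive_eq H); ring.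
Qed.

Lemma H_ge0 (a : R) : 0 <= a < 1 ->
  a ^+ 2 <= (a + 1) * ln (a + 1) + (- a + 1) * ln (- a + 1).
Proof.
case/andP=> ha0 ha1.
set f := (fun y : R => (y + 1) * ln (y + 1) + (- y + 1) * ln (- y + 1) - y ^+ 2).
have hd : forall x, x \in `[0, a]%R -> is_derive x 1 f (ln (x + 1) - ln (- x + 1) - 2 * x).
  move=> x; rewrite in_itv /= => /andP[h0 h1]; apply: der_H.
  apply/andP; split; first by apply: lt_le_trans h0; rewrite ltrN10.
  exact: le_lt_trans h1 ha1.
have [c hc hfc] := @MVT_segment R f (fun x => ln (x + 1) - ln (- x + 1) - 2 * x) 0 a ha0
  (fun x hx => hd x (subset_itv_oo_cc hx)) (derivable_within_continuous (fun x hx => @ex_derive _ _ _ _ _ _ _ (hd x hx))).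
move: hc; rewrite in_itv /= => /andP[hc0 hc1].
have hca : c < 1 by exact: le_lt_trans hc1 ha1.
have hpos : 0 <= ln (c + 1) - ln (- c + 1) - 2 * c.
  by rewrite subr_ge0; apply: phi_ge0; rewrite hc0.
have : 0 <= f a - f 0 by rewrite hfc; apply: mulr_ge0 => //; rewrite subr0.
rewrite /f !oppr0 !add0r ln1 !mulr0 expr0n /= !subr0 add0r subr_ge0.
by rewrite subr_ge0.
Qed.

Lemma ln2_ge : 1 <= 2 * ln (2 : R).
Proof.
have h := @le_ln1Dx R (- (2^-1)).
have h1 : -1 < - (2^-1 : R) by rewrite ltrN2 invf_lt1 // ltr1n.
have := h h1.
have -> : 1 - 2^-1 = (2^-1 : R) by rewrite {1}(splitr 1) mul1r addrK.
rewrite lnV ?posrE // lerN2 => H.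
by rewrite -ler_pdivrMl // mulr1.
Qed.

Lemma Hsym_ge (a : R) : -1 <= a <= 1 ->
  a ^+ 2 <= (a + 1) * ln (a + 1) + (- a + 1) * ln (- a + 1).
Proof.
case/andP=> h1 h2.
have key : forall b : R, 0 <= b <= 1 ->
    b ^+ 2 <= (b + 1) * ln (b + 1) + (- b + 1) * ln (- b + 1).
  move=> b /andP[b0 b1].
  have [->|bl] := eqVneq b 1.
    rewrite addNr mul0r addr0 expr1n.
    exact: ln2_ge.
  apply: H_ge0; rewrite b0 /=; by rewrite lt_neqAle bl b1.
have [a0|a0] := leP 0 a; first by apply: key; rewrite a0.
have := key (- a); rewrite opprK sqrrN addrC; apply.
by rewrite oppr_ge0 ltW //= lerNl.
Qed.

Lemma ifln_eq (p m : R) : (if p == 0 then 0 else p * ln (p / m)) = p * ln (p / m).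
Proof. by case: eqP => // ->; rewrite mul0r. Qed.

Lemma js_term (p q mu : R) : 0 <= p -> 0 <= q ->
  mu * `|p - q| / 2 - mu ^+ 2 * (p + q) / 4 <=
  (if p == 0 then 0 else p * ln (p / ((p + q) / 2))) / 2 +
  (if q == 0 then 0 else q * ln (q / ((p + q) / 2))) / 2.
Proof.
move=> hp hq; rewrite !ifln_eq.
have [s0|sn0] := eqVneq (p + q) 0.
  have p0 : p = 0 by move/eqP: s0 => s0; lra.
  have q0 : q = 0 by move/eqP: s0 => s0; lra.
  rewrite p0 q0 subrr normr0 !mulr0 !mul0r addr0 mulr0 mul0r; lra.
have spos : 0 < p + q by rewrite lt_neqAle eq_sym sn0 addr_ge0.
set m := (p + q) / 2.
have mpos : 0 < m by rewrite /m divr_gt0.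
set a := (p - q) / (p + q).
have ep : p / m = a + 1 by rewrite /a /m; field; rewrite sn0 //=.
have eq_ : q / m = - a + 1 by rewrite /a /m; field; rewrite sn0 //=.
have ep' : p = m * (a + 1) by rewrite -ep mulrC divfK // gt_eqF.
have eq' : q = m * (- a + 1) by rewrite -eq_ mulrC divfK // gt_eqF.
have ea : `|p - q| = 2 * m * `|a|.
  rewrite /a normrM normfV (gtr0_norm spos) /m; field; rewrite sn0 //=.
have ha : -1 <= a <= 1.
  rewrite -ler_norml /a normrM normfV (gtr0_norm spos) ler_pdivrMr // mul1r ler_norml //.
  apply/andP; split; lra.
have hG := @Hsym_ge a ha.
rewrite ep eq_ ea.
have ha2 : `|a| ^+ 2 = a ^+ 2 by rewrite real_normK // num_real.
have hsq : 0 <= m * (`|a| - mu) ^+ 2 by apply: mulr_ge0; [exact: ltW | exact: sqr_ge0].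
have hmG : m * a ^+ 2 <= m * ((a + 1) * ln (a + 1) + (- a + 1) * ln (- a + 1)).
  by rewrite ler_pM2l.

have e2 : p + q = 2 * m by rewrite /m; field.
rewrite e2.
set L1 := ln (a + 1) in hmG *; set L2 := ln (- a + 1) in hmG *.
set b := `|a| in ha2 hsq *.
rewrite ep' eq'.
nra.
Qed.

Lemma JS_lb (S : finType) (p q : S -> R) (mu : R) : is_prob p -> is_prob q ->
  mu * l1dist p q / 2 - mu ^+ 2 / 2 <= JS p q.
Proof.
move=> [hp0 hp1] [hq0 hq1].
rewrite /JS /KL /l1dist !mulr_suml -big_split /=.
have -> : mu * (\sum_x `|p x - q x|) / 2 - mu ^+ 2 / 2 =
   \sum_x (mu * `|p x - q x| / 2 - mu ^+ 2 * (p x + q x) / 4).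
  rewrite sumrB -!mulr_suml -!mulr_sumr big_split /= hp1 hq1 -mulrA; congr (_ - _).
  by field.
by apply: ler_sum => x _; apply: js_term.
Qed.
End Calc.
End CalcM.

Section Aux.
Variable R : realType.

Lemma eqle (x y : R) : x = y -> x <= y. Proof. by move=> ->. Qed.

Lemma le_sum1 (I : finType) (F : I -> R) i : (forall j, 0 <= F j) -> F i <= \sum_j F j.
Proof. by move=> h; rewrite (bigD1 i) //= lerDl sumr_ge0. Qed.

Lemma le_dsum m n (F : 'I_m -> 'I_n -> R) i j : (forall i j, 0 <= F i j) ->
  F i j <= \sum_i \sum_j F i j.
Proof.
move=> h; apply: (le_trans (@le_sum1 _ (fun j => F i j) j (h i))).
by apply: (@le_sum1 _ (fun i => \sum_j F i j) i) => k; apply: sumr_ge0.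
Qed.

Lemma sq_sum (I : finType) (F : I -> R) : (forall i, 0 <= F i) ->
  \sum_i F i ^+ 2 <= (\sum_i F i) ^+ 2.
Proof.
move=> h.
pose K := fun y1 y2 : R => (y1 <= y2 ^+ 2) && (0 <= y2).
suff /andP[] : K (\sum_i F i ^+ 2) (\sum_i F i) by [].
apply: (big_rec2 K); first by rewrite /K expr0n /= lexx.
move=> i y1 y2 _ /andP[h1 h2]; rewrite /K; have hi := h i.
apply/andP; split; nra.
Qed.

Lemma huber_ge0 (r : R) : 0 <= huber r.
Proof.
rewrite /huber; case: ifP => h; first by apply: divr_ge0 => //; exact: sqr_ge0.
move/negbT: h; rewrite -leNgt => h; lra.
Qed.

Lemma abs_le_huber (r : R) : `|r| <= huber r + 1 / 2.
Proof.
rewrite /huber; case: ifP => h; last by rewrite subrK.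
have e : r ^+ 2 = `|r| ^+ 2 by rewrite real_normK // num_real.
rewrite e; have := normr_ge0 r; nra.
Qed.

Lemma loss_ge0 m n (Yh Y : 'M[R]_(m, n)) : 0 <= loss Yh Y.
Proof.
rewrite /loss; apply: divr_ge0 => //; apply: sumr_ge0 => i _; apply: sumr_ge0 => j _.
exact: huber_ge0.
Qed.

Lemma loss_mul m n (Yh Y : 'M[R]_(m, n)) :
  (m * n)%:R * loss Yh Y = \sum_i \sum_j huber (Yh i j - Y i j).
Proof.
rewrite /loss; have [h|h] := eqVneq (m * n)%N 0%N.
  rewrite h mul0r; move/eqP: h; rewrite muln_eq0 => /orP[] /eqP h; subst.
    by rewrite big_ord0.
  by rewrite big1 // => i _; rewrite big_ord0.
by rewrite mulrC divfK // pnatr_eq0.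
Qed.

Lemma dconst m n (c : R) : \sum_(i < m) \sum_(j < n) c = (m * n)%:R * c.
Proof.
rewrite (eq_bigr (fun _ => c *+ n)); last by move=> i _; rewrite sumr_const card_ord.
by rewrite sumr_const card_ord -mulrnA mulr_natl mulnC.
Qed.

Lemma sum_rowabs_le m n (Yh Y : 'M[R]_(m, n)) :
  \sum_t rowabs (Yh - Y) t <= (m * n)%:R * loss Yh Y + (m * n)%:R / 2.
Proof.
rewrite loss_mul /rowabs.
apply: le_trans (_ : \sum_t \sum_j (huber (Yh t j - Y t j) + 1 / 2) <= _).
  apply: ler_sum => i _; apply: ler_sum => j _; rewrite !mxE; exact: abs_le_huber.
rewrite (eq_bigr (fun i => \sum_j huber (Yh i j - Y i j) + \sum_(j < n) (1 / 2 : R))); last first.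
  by move=> i _; rewrite big_split.
by rewrite big_split /= dconst mul1r.
Qed.

Lemma norm_le_frob m n (Y : 'M[R]_(m, n)) i j : `|Y i j| <= frob Y.
Proof.
rewrite /frob -sqrtr_sqr; apply: ler_wsqrtr.
by apply: (@le_dsum _ _ (fun i j => Y i j ^+ 2) i j) => ? ?; exact: sqr_ge0.
Qed.

Lemma frob_le_l1 m n (Y : 'M[R]_(m, n)) : frob Y <= \sum_i \sum_j `|Y i j|.
Proof.
have L0 : 0 <= \sum_i \sum_j `|Y i j| by do 2! (apply: sumr_ge0 => ? _).
rewrite /frob -(ger0_norm L0) -sqrtr_sqr; apply: ler_wsqrtr.
apply: le_trans (_ : \sum_i (\sum_j `|Y i j|) ^+ 2 <= _); last first.
  by apply: sq_sum => i; apply: sumr_ge0.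
apply: ler_sum => i _.
rewrite (eq_bigr (fun j => `|Y i j| ^+ 2)); last by move=> j _; rewrite real_normK // num_real.
by apply: sq_sum.
Qed.

Lemma l1_le_frob m n (Y : 'M[R]_(m, n)) : \sum_i \sum_j `|Y i j| <= (m * n)%:R * frob Y.
Proof.
rewrite -dconst; apply: ler_sum => i _; apply: ler_sum => j _; exact: norm_le_frob.
Qed.

Lemma up_bound n T (U : {linear 'rV[R]_n -> 'rV[R]_T}) (v : 'rV[R]_n) t :
  (forall s, 0 <= v 0 s) ->
  U v 0 t <= (\sum_s \sum_t' `|U (delta_mx 0 s) 0 t'|) * \sum_s v 0 s.
Proof.
move=> hv.
rewrite {1}(matrix_sum_delta v) big_ord1 linear_sum summxE mulr_sumr.
apply: ler_sum => s _; rewrite linearZ mxE mulrC; apply: ler_wpM2r => //.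
apply: le_trans (real_ler_norm _) _; first exact: num_real.
by apply: (@le_dsum _ _ (fun s t => `|U (delta_mx 0 s) 0 t|) s t) => ? ?.
Qed.


Lemma tmean_lin2 T (u v : 'I_T -> R) a b :
  tmean (fun t => a * u t + b * v t) = a * tmean u + b * tmean v.
Proof. by rewrite /tmean big_split /= -!mulr_sumr !mulrA mulrDl. Qed.

Lemma tmean_lin4 T (u v x y : 'I_T -> R) a b c d :
  tmean (fun t => a * u t + b * v t + c * x t + d * y t) =
  a * tmean u + b * tmean v + c * tmean x + d * tmean y.
Proof. by rewrite /tmean !big_split /= -!mulr_sumr !mulrA !mulrDl. Qed.

Lemma tmean_add_sum T (I : finType) (u : 'I_T -> R) (f : I -> 'I_T -> R) :
  tmean (fun t => u t + \sum_k f k t) = tmean u + \sum_k tmean (f k).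
Proof.
rewrite /tmean big_split /= mulrDl; congr (_ + _).
by rewrite exchange_big /= mulr_suml.
Qed.

Lemma tmean_le T (u v : 'I_T -> R) : (forall t, u t <= v t) -> tmean u <= tmean v.
Proof.
move=> h; rewrite /tmean; apply: ler_wpM2r; first by rewrite invr_ge0.
by apply: ler_sum => t _.
Qed.

Lemma tmean_const T (c : R) : (0 < T)%N -> tmean (fun _ : 'I_T => c) = c.
Proof.
move=> hT; rewrite /tmean sumr_const card_ord -[c *+ T]mulr_natr mulfK // pnatr_eq0 -lt0n //.
Qed.

Lemma tmean_ge0 T (u : 'I_T -> R) : (forall t, 0 <= u t) -> 0 <= tmean u.
Proof. by move=> h; rewrite /tmean divr_ge0 // sumr_ge0. Qed.

Lemma tmean_rowabs T C (Yh Y : 'M[R]_(T, C)) : (0 < T)%N ->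
  tmean (rowabs (Yh - Y)) <= C%:R * loss Yh Y + C%:R / 2.
Proof.
move=> hT; rewrite /tmean ler_pdivrMr ?ltr0n //.
apply: le_trans (sum_rowabs_le _ _ Yh Y) _.
by rewrite natrM; apply: eqle; ring.
Qed.

Lemma tmean_W T C N (W : {linear 'M[R]_(T, C) -> 'rV[R]_N}) (A : R) (hA : 0 < A)
  (hframe : forall Y, Num.sqrt A * frob Y <= frob (W Y)) (Xh X : 'M[R]_(T, C)) :
  (0 < T)%N ->
  tmean (rowabs (Xh - X)) <=
    (C%:R / Num.sqrt A) * (N%:R * loss (W Xh) (W X) + N%:R / 2).
Proof.
move=> hT.
have sA : 0 < Num.sqrt A by rewrite sqrtr_gt0.
have h1 : \sum_t rowabs (Xh - X) t <= (T * C)%:R * frob (Xh - X) by exact: l1_le_frob.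
have h2 : frob (Xh - X) <= frob (W (Xh - X)) / Num.sqrt A.
  by rewrite ler_pdivlMr // mulrC.
have h3 : frob (W (Xh - X)) <= (1 * N)%:R * loss (W Xh) (W X) + (1 * N)%:R / 2.
  apply: (le_trans (frob_le_l1 _ _ _)); rewrite linearB.
  exact: (sum_rowabs_le _ _ (W Xh) (W X)).
rewrite /tmean ler_pdivrMr ?ltr0n //.
apply: (le_trans h1).
rewrite mul1n in h3; rewrite natrM.
have hT0 : 0 <= (T%:R : R) by [].
have hC0 : 0 <= (C%:R : R) by [].
have h4 : frob (Xh - X) <= (N%:R * loss (W Xh) (W X) + N%:R / 2) / Num.sqrt A.
  apply: (le_trans h2); apply: ler_wpM2r => //; by rewrite invr_ge0 ltW.
have e : C%:R / Num.sqrt A * (N%:R * loss (W Xh) (W X) + N%:R / 2) * T%:R =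
   T%:R * C%:R * ((N%:R * loss (W Xh) (W X) + N%:R / 2) / Num.sqrt A) by ring.
rewrite e; apply: ler_wpM2l => //; exact: mulr_ge0.
Qed.

End Aux.


Section Aux2.
Variable R : realType.

Lemma tmean_on_ge T (Om : {set 'I_T}) (u : 'I_T -> R) (c : R) :
  Om != set0 -> (forall t, t \in Om -> c <= u t) -> c <= tmean_on Om u.
Proof.
move=> hO h; rewrite /tmean_on.
have hpos : (0 : R) < #|Om|%:R by rewrite ltr0n card_gt0.
rewrite ler_pdivlMr // mulr_natr -sumr_const; exact: ler_sum.
Qed.

Lemma tmean_on_lin4 T (Om : {set 'I_T}) (u v x y : 'I_T -> R) a b c d :
  tmean_on Om (fun t => a * u t + b * v t + c * x t + d * y t) =
  a * tmean_on Om u + b * tmean_on Om v + c * tmean_on Om x + d * tmean_on Om y.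
Proof. by rewrite /tmean_on !big_split /= -!mulr_sumr !mulrA !mulrDl. Qed.

Lemma tmean_on_ge0 T (Om : {set 'I_T}) (u : 'I_T -> R) :
  (forall t, 0 <= u t) -> 0 <= tmean_on Om u.
Proof. by move=> h; rewrite /tmean_on divr_ge0 // sumr_ge0. Qed.

End Aux2.
(* Coarse scales k = 2..K are indexed by k' : 'I_K.-1 (k = k' + 2). *)
Theorem lemma3 (R : realType) (T C K N : nat)
  (hT : (1 <= T)%N) (hC : (1 <= C)%N) (hK : (1 <= K)%N)
  (Tk : 'I_K.-1 -> nat) (hTk : forall k, (1 <= Tk k)%N)
  (* (a) frame-bounded linear map *)
  (W : {linear 'M[R]_(T, C) -> 'rV[R]_N}) (A B : R)
  (hA : 0 < A) (hAB : A <= B)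
  (hframe : forall Y : 'M[R]_(T, C),
     Num.sqrt A * frob Y <= frob (W Y) /\ frob (W Y) <= Num.sqrt B * frob Y)
  (* (b) upsampling operators *)
  (Up : forall k : 'I_K.-1, {linear 'rV[R]_(Tk k) -> 'rV[R]_T})
  (* (c) moving-average smoother *)
  (Wn : 'I_T -> {set 'I_T}) (w : 'I_T -> 'I_T -> R)
  (hw0 : forall t s, s \in Wn t -> 0 <= w t s)
  (hw1 : forall t, \sum_(s in Wn t) w t s = 1)
  (rho : R) (hrho : 1 <= rho)
  (hrhoMA : forall u : 'I_T -> R, (forall t, 0 <= u t) ->
     tmean (MA Wn w u) <= rho * tmean u)
  (* (d) weights *)
  (af at_ ag ac acyc ams : R)
  (haf : 0 <= af) (hat : 0 <= at_) (hag : 0 <= ag) (hac : 0 <= ac)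
  (hacyc : 0 <= acyc) (hams : 0 <= ams)
  (om : 'I_K.-1 -> R) (omfull : R)
  (hom : forall k, 0 < om k) (homfull : 0 < omfull)
  (homsum : \sum_k om k + omfull = 1) :
  let c := fun (Xms Xf : 'M[R]_(T, C)) (t : 'I_T) => rowabs (Xms - Xf) t in
  let Acyc_tilde := fun (X Xh Xf Xms : 'M[R]_(T, C)) (g : 'I_T -> R) (t : 'I_T) =>
      af * rowabs (Xf - X) t + at_ * rowabs (Xh - X) t + ag * `|g t|
      + ac * c Xms Xf t in
  let Acyc := fun X Xh Xf Xms g => MA Wn w (Acyc_tilde X Xh Xf Xms g) in
  (* (1) *)
  (exists kms kcyc kcons kg k0 : R,
    [/\ 0 <= kms, 0 <= kcyc, 0 <= kcons, 0 <= kg & 0 <= k0] /\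
    forall (X Xh Xf Xms : 'M[R]_(T, C))
           (Xk Xkms : forall k : 'I_K.-1, 'M[R]_(Tk k, C))
           (g : 'I_T -> R) (ems ecyc econs : R),
      let Lms := \sum_k om k * loss (Xkms k) (Xk k) + omfull * loss Xms X in
      let Lcyc := loss (W Xh) (W X) + loss Xf X in
      let Lcons := loss Xms Xf in
      let Ams := fun t : 'I_T => rowabs (Xms - X) t
          + \sum_k (Up k (rowabs_vec (Xkms k - Xk k))) ord0 t in
      let Aall := fun t => acyc * Acyc X Xh Xf Xms g t + ams * Ams t in
      Lms <= ems -> Lcyc <= ecyc -> Lcons <= econs ->
      tmean Aall <= kms * ems + rho * kcyc * ecyc + rho * kcons * econs
                    + rho * kg * ag * tmean (fun t => `|g t|) + k0)
  /\
  (* (2) *)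
  (forall (X Xh Xf Xms : 'M[R]_(T, C)) (g : 'I_T -> R)
          (Om : {set 'I_T}) (dt df dc : R),
     Om != set0 ->
     tmean_on Om (rowabs (Xh - X)) >= dt ->
     tmean_on Om (rowabs (Xf - X)) >= df ->
     tmean_on Om (c Xms Xf) >= dc ->
     tmean_on Om (Acyc_tilde X Xh Xf Xms g) >= at_ * dt + af * df + ac * dc)
  /\
  (* (3) *)
  (forall (X Xh Xf Xms : 'M[R]_(T, C)) (g : 'I_T -> R)
          (Om : {set 'I_T}) (dt df dc : R),
     Om != set0 ->
     (forall t, t \in Om -> rowabs (Xh - X) t >= dt) ->
     (forall t, t \in Om -> rowabs (Xf - X) t >= df) ->
     (forall t, t \in Om -> c Xms Xf t >= dc) ->
     forall t, t \in Om -> Wn t \subset Om ->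
       Acyc X Xh Xf Xms g t >= at_ * dt + af * df + ac * dc)
  /\
  (* (4) *)
  (forall (S : finType) (Om : {set 'I_T}) (p pf : 'I_T -> S -> R) (dp : R),
     Om != set0 -> 0 <= dp ->
     (forall t, t \in Om -> is_prob (p t) /\ is_prob (pf t)) ->
     (forall t, t \in Om -> l1dist (p t) (pf t) >= dp) ->
     tmean_on Om (fun t => JS (p t) (pf t)) >= dp ^+ 2 / 8).
Proof.
move=> c Acyc_tilde Acyc.
split; last split; last split.
- have hT0 : (0 < T)%N by [].
  set CC : R := C%:R.
  have hCC : 0 <= CC by [].
  have sA : 0 < Num.sqrt A by rewrite sqrtr_gt0.
  set Q : R := CC / Num.sqrt A.
  have hQ : 0 <= Q by rewrite divr_ge0 // ltW.
  set NN : R := N%:R.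
  have hNN : 0 <= NN by [].
  pose M k := \sum_s \sum_t' `|Up k (delta_mx 0 s) 0 t'|.
  have hM : forall k, 0 <= M k by move=> k; do 2! (apply: sumr_ge0 => ? _).
  pose TC k : R := (Tk k * C)%:R.
  have hTC : forall k, 0 <= TC k by [].
  have homf : 0 <= omfull by exact: ltW.
  exists (ams * (CC / omfull + \sum_k M k * TC k / om k)),
    (acyc * (af * CC + at_ * (Q * NN))), (acyc * ac * CC), acyc,
    (acyc * rho * (af * CC / 2 + at_ * (Q * (NN / 2)) + ac * CC / 2)
      + ams * (CC / 2 + \sum_k M k * TC k / 2)).
  have rho0 : 0 < rho by apply: lt_le_trans hrho.
  split.
    have hom' : forall k, 0 <= om k by move=> k; apply: ltW.
    have hrho0 : 0 <= rho by apply: ltW.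
    split; repeat first [ done | exact: hM | exact: hTC | exact: hom' | apply: mulr_ge0 | apply: addr_ge0
       | apply: sumr_ge0 => ? _ | rewrite invr_ge0 ].
  move=> X Xh Xf Xms Xk Xkms g ems ecyc econs Lms Lcyc Lcons Ams Aall hms hcyc hcons.
  have lW0 := loss_ge0 _ _ _ (W Xh) (W X).
  have lf0 := loss_ge0 _ _ _ Xf X.
  have hlW : loss (W Xh) (W X) <= ecyc by apply: le_trans hcyc; rewrite /Lcyc lerDl.
  have hlf : loss Xf X <= ecyc by apply: le_trans hcyc; rewrite /Lcyc lerDr.
  have hterms : forall k, 0 <= om k * loss (Xkms k) (Xk k).
    by move=> k; apply: mulr_ge0; [apply: ltW | apply: loss_ge0].
  have hlfull : loss Xms X <= ems / omfull.
    rewrite ler_pdivlMr // mulrC; apply: le_trans hms; rewrite /Lms lerDr.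
    by apply: sumr_ge0 => k _.
  have hlk : forall k, loss (Xkms k) (Xk k) <= ems / om k.
    move=> k; rewrite ler_pdivlMr // mulrC; apply: le_trans hms; rewrite /Lms.
    apply: le_trans (_ : \sum_k om k * loss (Xkms k) (Xk k) <= _).
      exact: (@le_sum1 R _ (fun k => om k * loss (Xkms k) (Xk k)) k).
    by rewrite lerDl; apply: mulr_ge0 => //; apply: loss_ge0.
  have hAt0 : forall t, 0 <= Acyc_tilde X Xh Xf Xms g t.
    move=> t; rewrite /Acyc_tilde /c /rowabs /=.
    have s0 : forall Y : 'M[R]_(T, C), 0 <= \sum_j `|Y t j| by move=> Y; apply: sumr_ge0.
    by repeat first [ done | apply: addr_ge0 | apply: mulr_ge0 ].
  have hA1 : tmean (Acyc X Xh Xf Xms g) <= rho * tmean (Acyc_tilde X Xh Xf Xms g).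
    exact: hrhoMA.
  have e4 := @tmean_lin4 R _ (rowabs (Xf - X)) (rowabs (Xh - X)) (fun t => `|g t|) (c Xms Xf) af at_ ag ac.
  have e4' : tmean (Acyc_tilde X Xh Xf Xms g) = _ := e4.
  have m1 : tmean (rowabs (Xf - X)) <= CC * ecyc + CC / 2.
    apply: le_trans (tmean_rowabs _ _ _ Xf X hT0) _.
    by rewrite lerD2r; apply: ler_wpM2l.
  have m2 : tmean (rowabs (Xh - X)) <= Q * (NN * ecyc + NN / 2).
    apply: le_trans (tmean_W _ _ _ _ W _ hA (fun Y => (hframe Y).1) Xh X hT0) _.
    by apply: ler_wpM2l => //; rewrite lerD2r; apply: ler_wpM2l.
  have m3 : tmean (c Xms Xf) <= CC * econs + CC / 2.
    apply: le_trans (tmean_rowabs _ _ _ Xms Xf hT0) _.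
    by rewrite lerD2r; apply: ler_wpM2l.
  set mg := tmean (fun t => `|g t|).
  have mg0 : 0 <= mg by apply: tmean_ge0.
  have hB : tmean (Acyc_tilde X Xh Xf Xms g) <=
      af * (CC * ecyc + CC / 2) + at_ * (Q * (NN * ecyc + NN / 2)) + ag * mg
      + ac * (CC * econs + CC / 2).
    rewrite e4'.
    have := ler_wpM2l haf m1; have := ler_wpM2l hat m2; have := ler_wpM2l hac m3.
    rewrite -/mg; lra.
  have eS : tmean Ams = tmean (rowabs (Xms - X)) +
      \sum_k tmean (fun t => Up k (rowabs_vec (Xkms k - Xk k)) 0 t).
    exact: tmean_add_sum.
  have m4 : tmean (rowabs (Xms - X)) <= CC * (ems / omfull) + CC / 2.
    apply: le_trans (tmean_rowabs _ _ _ Xms X hT0) _.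
    by rewrite lerD2r; apply: ler_wpM2l.
  have m5 : forall k, tmean (fun t => Up k (rowabs_vec (Xkms k - Xk k)) 0 t) <=
      M k * TC k / om k * ems + M k * TC k / 2.
    move=> k.
    have hv : forall s, 0 <= rowabs_vec (Xkms k - Xk k) 0 s.
      by move=> s; rewrite mxE; apply: sumr_ge0.
    apply: le_trans (tmean_le _ _ _ _ (fun t => @up_bound R _ _ (Up k) _ t hv)) _.
    rewrite tmean_const //.
    have hs : \sum_s rowabs_vec (Xkms k - Xk k) 0 s <= TC k * loss (Xkms k) (Xk k) + TC k / 2.
      rewrite (eq_bigr (fun s => rowabs (Xkms k - Xk k) s)); last by move=> s _; rewrite mxE.
      exact: sum_rowabs_le.
    apply: le_trans (ler_wpM2l (hM k) hs) _.
    have := ler_wpM2l (mulr_ge0 (hM k) (hTC k)) (hlk k).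
    have -> : M k * TC k / om k * ems = M k * TC k * (ems / om k) by rewrite mulrA mulrAC.
    move=> H; apply: le_trans (_ : M k * TC k * loss (Xkms k) (Xk k) + M k * (TC k / 2) <= _).
      by apply: eqle; ring.
    apply: (le_trans (lerD H (lexx (M k * (TC k / 2))))).
    by apply: eqle; ring.
  have hS : tmean Ams <= CC * (ems / omfull) + CC / 2 +
      ((\sum_k M k * TC k / om k) * ems + \sum_k M k * TC k / 2).
    rewrite eS; apply: lerD => //.
    rewrite mulr_suml -big_split /=; exact: ler_sum.
  have eA : tmean Aall = acyc * tmean (Acyc X Xh Xf Xms g) + ams * tmean Ams.
    exact: tmean_lin2.
  rewrite eA.
  have H1 := ler_wpM2l hacyc (le_trans hA1 (ler_wpM2l (ltW rho0) hB)).
  have H2 := ler_wpM2l hams hS.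
  apply: le_trans (lerD H1 H2) _.
  apply: eqle. rewrite /mg; ring.
- move=> X Xh Xf Xms g Om dt df dc hO h1 h2 h3.
  have e := @tmean_on_lin4 R _ Om (rowabs (Xf - X)) (rowabs (Xh - X)) (fun t => `|g t|) (c Xms Xf) af at_ ag ac.
  have -> : tmean_on Om (Acyc_tilde X Xh Xf Xms g) = _ := e.
  have := @tmean_on_ge0 R _ Om (fun t => `|g t|) (fun t => normr_ge0 _).
  have := ler_wpM2l haf h2; have := ler_wpM2l hat h1; have := ler_wpM2l hac h3.
  move=> a1 a2 a3 a4; have := mulr_ge0 hag a4; lra.
- move=> X Xh Xf Xms g Om dt df dc hO h1 h2 h3 t ht hW.
  rewrite /Acyc /MA.
  rewrite -[X in X <= _]mul1r -(hw1 t) mulr_suml.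
  apply: ler_sum => s hs.
  apply: (ler_wpM2l (hw0 t s hs)).
  have hsO : s \in Om by move/subsetP: hW; apply.
  rewrite /Acyc_tilde.
  have := ler_wpM2l haf (h2 s hsO); have := ler_wpM2l hat (h1 s hsO);
    have := ler_wpM2l hac (h3 s hsO).
  move=> a1 a2 a3; have := mulr_ge0 hag (normr_ge0 (g s)); lra.
- move=> S Om p pf dp hO hdp hpr hl.
  apply: tmean_on_ge => // t ht.
  have [hp hq] := hpr t ht.
  have := @CalcM.JS_lb R S (p t) (pf t) (dp / 2) hp hq.
  have := hl t ht => hD.
  have := ler_wpM2l hdp hD.
  move=> a1 a2; apply: le_trans a2; nra.
Qed.
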